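(* Let the functions satisfy the $M=2$ system and the boundary conditions (B) (see context), and assume $\eta_0'(s)\neq0$ for $s>0$. Define $F:=-3x_0y_1-3x_1y_2-e_1x_0y_2$. Then $$F^2=4e_1^2(\eta_0')^2-12e_2(\eta_0')^2+12\eta_0(\eta_0')^2-36s(\eta_0')^3+9s^2(\eta_0'')^2-12s\eta_0'\big(\eta_0''+s\eta_0'''\big).$$
   Context: Fix complex parameters $\nu_0,\nu_1,\nu_2$ with $\nu_2-\nu_1\notin\mathbb Z$, and let $e_1=\nu_0+\nu_1+\nu_2$, $e_2=\nu_0\nu_1+\nu_0\nu_2+\nu_1\nu_2$, $e_3=\nu_0\nu_1\nu_2$. The $M=2$ system is the following system for smooth complex-valued functions $x_0,x_1,x_2,y_0,y_1,y_2,\xi_0,\xi_1,\xi_2,\eta_0,\eta_1,\eta_2$ of $s\in(0,\infty)$, with $'=d/ds$: $sx_0'=-\eta_0x_0-x_1$, $sx_1'=-\eta_1x_0-x_2$, $sx_2'=-\eta_2x_0-sx_0+\xi_0x_0+\xi_1x_1+\xi_2x_2$, $sy_2'=-\xi_2y_2+y_1$, $sy_1'=-\xi_1y_2+y_0$, $sy_0'=-\xi_0y_2+sy_2+\eta_0y_0+\eta_1y_1+\eta_2y_2$, $\xi_0'=-x_0y_0$, $\xi_1'=-x_0y_1$, $\xi_2'=-x_0y_2$, $\eta_0'=-x_0y_2$, $\eta_1'=-x_1y_2$, $\eta_2'=-x_2y_2$. Boundary conditions (B): as $s\to0^+$, $\eta_0,\eta_1,\eta_2\to0$, $\xi_0\to-e_3$,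 $\xi_1\to e_2$, $\xi_2\to-e_1$, and $x_j(s)y_k(s)\to0$, $s\,x_j(s)y_k(s)\to0$ for all $j,k\in\{0,1,2\}$. *)

(* Defs.v *)
From Stdlib Require Import Reals Lra List.
Open Scope R_scope.

Definition CC : Type := (R * R)%type.
Definition RtoC (r : R) : CC := (r, 0).
Definition Cadd (a b : CC) : CC := (fst a + fst b, snd a + snd b).
Definition Copp (a : CC) : CC := (- fst a, - snd a).
Definition Csub (a b : CC) : CC := Cadd a (Copp b).
Definition Cmul (a b : CC) : CC :=
  (fst a * fst b - snd a * snd b, fst a * snd b + snd a * fst b).

Declare Scope C_scope.
Delimit Scope C_scope with CC.
Notation "a + b" := (Cadd a b) : C_scope.
Notation "a - b" := (Csub a b) : C_scope.
Notation "- a" := (Copp a) : C_scope.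
Notation "a * b" := (Cmul a b) : C_scope.

Definition Cderiv (f : R -> CC) (s : R) (d : CC) : Prop :=
  derivable_pt_lim (fun t => fst (f t)) s (fst d) /\
  derivable_pt_lim (fun t => snd (f t)) s (snd d).

Definition Clim0 (f : R -> CC) (L : CC) : Prop :=
  forall eps : R, 0 < eps -> exists delta : R, 0 < delta /\
    forall s : R, 0 < s < delta ->
      Rabs (fst (f s) - fst L) < eps /\ Rabs (snd (f s) - snd L) < eps.

(* Main.v *)
Require Import Defs.
From Stdlib Require Import Reals List Lra.
From Coquelicot Require Derive.
Open Scope R_scope.

Lemma CC_ring : ring_theory (RtoC 0) (RtoC 1) Cadd Cmul Csub Copp (@eq CC).
Proof.
  constructor; intros;
  repeat match goal with a : CC |- _ => destruct a end;
  unfold Csub, RtoC, Cadd, Cmul, Copp; simpl; f_equal; ring.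
Qed.
Add Ring CCr : CC_ring.

Lemma dpl_eq f x l l' : derivable_pt_lim f x l -> l = l' -> derivable_pt_lim f x l'.
Proof. intros H ->; exact H. Qed.

Lemma Cderiv_eq f s d d' : Cderiv f s d -> d = d' -> Cderiv f s d'.
Proof. intros H ->; exact H. Qed.

Lemma Cderiv_add f g s df dg : Cderiv f s df -> Cderiv g s dg ->
  Cderiv (fun t => f t + g t)%CC s (df + dg)%CC.
Proof.
  intros [H1 H2] [H3 H4]; split.
  - exact (derivable_pt_lim_plus (fun t => fst (f t)) (fun t => fst (g t)) s _ _ H1 H3).
  - exact (derivable_pt_lim_plus (fun t => snd (f t)) (fun t => snd (g t)) s _ _ H2 H4).
Qed.

Lemma Cderiv_opp f s df : Cderiv f s df -> Cderiv (fun t => - f t)%CC s (- df)%CC.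
Proof.
  intros [H1 H2]; split.
  - exact (derivable_pt_lim_opp (fun t => fst (f t)) s _ H1).
  - exact (derivable_pt_lim_opp (fun t => snd (f t)) s _ H2).
Qed.

Lemma Cderiv_sub f g s df dg : Cderiv f s df -> Cderiv g s dg ->
  Cderiv (fun t => f t - g t)%CC s (df - dg)%CC.
Proof. intros H1 H2. apply Cderiv_add; auto. apply Cderiv_opp; auto. Qed.

Lemma Cderiv_mul f g s df dg : Cderiv f s df -> Cderiv g s dg ->
  Cderiv (fun t => f t * g t)%CC s (df * g s + f s * dg)%CC.
Proof.
  intros [H1 H2] [H3 H4]; split.
  - eapply dpl_eq.
    + exact (derivable_pt_lim_minus _ _ s _ _
        (derivable_pt_lim_mult (fun t => fst (f t)) (fun t => fst (g t)) s _ _ H1 H3)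
        (derivable_pt_lim_mult (fun t => snd (f t)) (fun t => snd (g t)) s _ _ H2 H4)).
    + unfold Cadd, Cmul; simpl; ring.
  - eapply dpl_eq.
    + exact (derivable_pt_lim_plus _ _ s _ _
        (derivable_pt_lim_mult (fun t => fst (f t)) (fun t => snd (g t)) s _ _ H1 H4)
        (derivable_pt_lim_mult (fun t => snd (f t)) (fun t => fst (g t)) s _ _ H2 H3)).
    + unfold Cadd, Cmul; simpl; ring.
Qed.

Lemma Cderiv_id s : Cderiv (fun t => RtoC t) s (RtoC 1).
Proof.
  split.
  - exact (derivable_pt_lim_id s).
  - exact (derivable_pt_lim_const 0 s).
Qed.

Lemma dpl_ext_pos f g s l : 0 < s -> (forall t, 0 < t -> f t = g t) ->
  derivable_pt_lim f s l -> derivable_pt_lim g s l.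
Proof.
  intros Hs Hfg H eps He.
  destruct (H eps He) as [d Hd].
  assert (Hm : 0 < Rmin d s) by (apply Rmin_pos; [apply cond_pos|lra]).
  exists (mkposreal _ Hm); intros h Hh Hhd; simpl in Hhd.
  assert (Hh1 : Rabs h < d) by (eapply Rlt_le_trans; [exact Hhd| apply Rmin_l]).
  assert (Hh2 : Rabs h < s) by (eapply Rlt_le_trans; [exact Hhd| apply Rmin_r]).
  rewrite <- (Hfg s Hs), <- (Hfg (s+h)).
  - apply Hd; auto.
  - destruct (Rabs_def2 _ _ Hh2); lra.
Qed.

Lemma Cderiv_ext_pos f g s d : 0 < s -> (forall t, 0 < t -> f t = g t) ->
  Cderiv f s d -> Cderiv g s d.
Proof.
  intros Hs Hfg [H1 H2]; split.
  - apply (dpl_ext_pos (fun t => fst (f t))); auto. intros t Ht; rewrite Hfg; auto.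
  - apply (dpl_ext_pos (fun t => snd (f t))); auto. intros t Ht; rewrite Hfg; auto.
Qed.

Lemma Cderiv_unique f s d1 d2 : Cderiv f s d1 -> Cderiv f s d2 -> d1 = d2.
Proof.
  intros [H1 H2] [H3 H4]. destruct d1, d2; simpl in *.
  f_equal; eapply uniqueness_limite; eauto.
Qed.

Lemma R_const_lim (f : R -> R) L :
  (forall t, 0 < t -> derivable_pt_lim f t 0) ->
  (forall eps, 0 < eps -> exists delta, 0 < delta /\
     forall t, 0 < t < delta -> Rabs (f t - L) < eps) ->
  forall s, 0 < s -> f s = L.
Proof.
  intros Hd Hl s Hs.
  assert (Hc : forall a b, 0 < a -> a <= b -> f a = f b).
  { intros a b Ha Hab.
    destruct (Derive.MVT_gen f a b (fun _ => 0)) as [c [_ Hc]].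
    - intros x Hx. apply Derive.is_derive_Reals. apply Hd.
      rewrite Rmin_left in Hx by lra. lra.
    - intros x Hx. rewrite Rmin_left in Hx by lra.
      apply derivable_continuous_pt. exists 0. apply Hd. lra.
    - lra. }
  destruct (Req_dec (f s) L) as [E|E]; auto.
  exfalso.
  assert (Hp : 0 < Rabs (f s - L)) by (apply Rabs_pos_lt; lra).
  destruct (Hl _ Hp) as [d [Hd0 Hdd]].
  set (t := Rmin s d / 2).
  assert (Ht : 0 < t) by (unfold t; pose proof (Rmin_pos s d Hs Hd0); lra).
  assert (Ht2 : t < d) by (unfold t; pose proof (Rmin_r s d); pose proof (Rmin_pos s d Hs Hd0); lra).
  assert (Ht3 : t <= s) by (unfold t; pose proof (Rmin_l s d); pose proof (Rmin_pos s d Hs Hd0); lra).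
  pose proof (Hdd t (conj Ht Ht2)).
  rewrite (Hc t s Ht Ht3) in H. lra.
Qed.

Lemma C_const_lim f L : (forall t, 0 < t -> Cderiv f t (RtoC 0)) -> Clim0 f L ->
  forall s, 0 < s -> f s = L.
Proof.
  intros Hd Hl s Hs. destruct L as [l1 l2].
  assert (E1 : fst (f s) = l1).
  { apply (R_const_lim (fun t => fst (f t))); auto.
    - intros t Ht; apply Hd; auto.
    - intros eps He; destruct (Hl eps He) as [d [Hd0 H]]; exists d; split; auto.
      intros t Ht; apply (H t Ht). }
  assert (E2 : snd (f s) = l2).
  { apply (R_const_lim (fun t => snd (f t))); auto.
    - intros t Ht; apply Hd; auto.
    - intros eps He; destruct (Hl eps He) as [d [Hd0 H]]; exists d; split; auto.
      intros t Ht; apply (H t Ht). }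
  destruct (f s); simpl in *; subst; auto.
Qed.

Definition D0 (t : R) : Prop := 0 < t.

Lemma Clim0_split f L : Clim0 f L <->
  limit1_in (fun t => fst (f t)) D0 (fst L) 0 /\ limit1_in (fun t => snd (f t)) D0 (snd L) 0.
Proof.
  unfold limit1_in, limit_in, D0; simpl; unfold R_dist; split.
  - intros H; split; intros eps He; destruct (H eps He) as [d [Hd H']];
      exists d; split; auto; intros x [Hx Hxd]; rewrite Rminus_0_r, Rabs_pos_eq in Hxd by lra;
      apply H'; lra.
  - intros [H1 H2] eps He.
    destruct (H1 eps He) as [d1 [Hd1 H1']]; destruct (H2 eps He) as [d2 [Hd2 H2']].
    exists (Rmin d1 d2); split; [apply Rmin_pos; lra|].
    intros s Hs. pose proof (Rmin_l d1 d2); pose proof (Rmin_r d1 d2).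
    split; [apply H1'|apply H2']; rewrite Rminus_0_r, Rabs_pos_eq; lra.
Qed.

Lemma Clim0_add f g a b : Clim0 f a -> Clim0 g b -> Clim0 (fun t => f t + g t)%CC (a + b)%CC.
Proof.
  rewrite !Clim0_split; intros [H1 H2] [H3 H4]; split.
  - exact (limit_plus _ _ _ _ _ _ H1 H3).
  - exact (limit_plus _ _ _ _ _ _ H2 H4).
Qed.

Lemma Clim0_opp f a : Clim0 f a -> Clim0 (fun t => - f t)%CC (- a)%CC.
Proof.
  rewrite !Clim0_split; intros [H1 H2]; split.
  - exact (limit_Ropp _ _ _ _ H1).
  - exact (limit_Ropp _ _ _ _ H2).
Qed.

Lemma Clim0_sub f g a b : Clim0 f a -> Clim0 g b -> Clim0 (fun t => f t - g t)%CC (a - b)%CC.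
Proof. intros; apply Clim0_add; auto; apply Clim0_opp; auto. Qed.

Lemma Clim0_mul f g a b : Clim0 f a -> Clim0 g b -> Clim0 (fun t => f t * g t)%CC (a * b)%CC.
Proof.
  rewrite !Clim0_split; intros [H1 H2] [H3 H4]; split.
  - exact (limit_minus _ _ _ _ _ _ (limit_mul _ _ _ _ _ _ H1 H3) (limit_mul _ _ _ _ _ _ H2 H4)).
  - exact (limit_plus _ _ _ _ _ _ (limit_mul _ _ _ _ _ _ H1 H4) (limit_mul _ _ _ _ _ _ H2 H3)).
Qed.

Lemma RtoC_add a b : RtoC (a + b) = (RtoC a + RtoC b)%CC.
Proof. unfold RtoC, Cadd; simpl; f_equal; ring. Qed.
Lemma RtoC_mul a b : RtoC (a * b) = (RtoC a * RtoC b)%CC.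
Proof. unfold RtoC, Cmul; simpl; f_equal; ring. Qed.
Lemma R3 : RtoC 3 = (RtoC 1 + RtoC 1 + RtoC 1)%CC.
Proof. rewrite <- !RtoC_add; f_equal; ring. Qed.
Lemma R4 : RtoC 4 = (RtoC 1 + RtoC 1 + RtoC 1 + RtoC 1)%CC.
Proof. rewrite <- !RtoC_add; f_equal; ring. Qed.
Lemma R9 : RtoC 9 = (RtoC 3 * RtoC 3)%CC.
Proof. rewrite <- !RtoC_mul; f_equal; ring. Qed.
Lemma R12 : RtoC 12 = (RtoC 3 * RtoC 4)%CC.
Proof. rewrite <- !RtoC_mul; f_equal; ring. Qed.
Lemma R36 : RtoC 36 = (RtoC 3 * RtoC 3 * RtoC 4)%CC.
Proof. rewrite <- !RtoC_mul; f_equal; ring. Qed.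

Open Scope C_scope.
Lemma sub0 a b c t : t = RtoC 0 -> a = b + c * t -> a = b.
Proof. intros -> ->; ring. Qed.
Lemma alg (S X0 X1 X2 Y0 Y1 Y2 A1 A2 B0 B1 e1 e2 p q r DX0 DX1 DY1 DY2 : CC)
 (Hp : p = -(X0*Y2))
 (Hq : q = -(DX0*Y2 + X0*DY2))
 (Hr : RtoC 1 * q + S*r = -( (-( -(X0*Y2)*X0 + B0*DX0) - DX1)*Y2 + (-(B0*X0) - X1)*DY2
          + DX0*(-(A2*Y2)+Y1) + X0*(-( -(X0*Y2)*Y2 + A2*DY2) + DY1) ))
 (hdx0 : S*DX0 = -(B0*X0) - X1)
 (hdx1 : S*DX1 = -(B1*X0) - X2)
 (hdy2 : S*DY2 = -(A2*Y2)+Y1)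
 (hdy1 : S*DY1 = -(A1*Y2)+Y0)
 (hT : X0*Y0+X1*Y1+X2*Y2 = RtoC 0)
 (he1 : e1 = B0 - A2)
 (he2 : e2 = B0 - B1 + A1 - A2*B0 + S*X0*Y2) :
 (- (RtoC 3 * X0 * Y1) - RtoC 3 * X1 * Y2 - e1 * X0 * Y2) *
 (- (RtoC 3 * X0 * Y1) - RtoC 3 * X1 * Y2 - e1 * X0 * Y2) =
       RtoC 4 * e1 * e1 * p * p - RtoC 12 * e2 * p * p
       + RtoC 12 * B0 * p * p - RtoC 36 * S * p * p * p
       + RtoC 9 * S * S * q * q
       - RtoC 12 * S * p * (q + S * r).
Proof.
  assert (Q : S*q = -((-(B0*X0)-X1)*Y2 + X0*(-(A2*Y2)+Y1))).
  { rewrite Hq. transitivity (-((S*DX0)*Y2 + X0*(S*DY2))); [ring|].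
    rewrite hdx0, hdy2; reflexivity. }
  assert (W : S*(RtoC 1 * q + S*r) = -( (-( -(X0*Y2)*X0*S + B0*(-(B0*X0) - X1)) - (-(B1*X0) - X2))*Y2
       + (-(B0*X0) - X1)*(-(A2*Y2)+Y1) + (-(B0*X0) - X1)*(-(A2*Y2)+Y1)
       + X0*(-( -(X0*Y2)*Y2*S + A2*(-(A2*Y2)+Y1)) + (-(A1*Y2)+Y0)))).
  { rewrite Hr.
    transitivity (-( (-( -(X0*Y2)*X0*S + B0*(S*DX0)) - (S*DX1))*Y2
       + (-(B0*X0) - X1)*(S*DY2) + (S*DX0)*(-(A2*Y2)+Y1)
       + X0*(-( -(X0*Y2)*Y2*S + A2*(S*DY2)) + (S*DY1)))); [ring|].
    rewrite hdx0, hdx1, hdy2, hdy1; reflexivity. }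
  assert (G : RtoC 4 * e1 * e1 * p * p - RtoC 12 * e2 * p * p
       + RtoC 12 * B0 * p * p - RtoC 36 * S * p * p * p
       + RtoC 9 * S * S * q * q
       - RtoC 12 * S * p * (q + S * r) =
       RtoC 4 * e1 * e1 * p * p - RtoC 12 * e2 * p * p
       + RtoC 12 * B0 * p * p - RtoC 36 * S * p * p * p
       + RtoC 9 * (S * q) * (S * q)
       - RtoC 12 * p * (S*(RtoC 1 * q + S * r))) by ring.
  rewrite G, Q, W, Hp, he1, he2. clear G Q W Hr Hq hdx0 hdx1 hdy1 hdy2.
  rewrite R36, R12, R9, R4, R3.
  apply (sub0 _ _ ((RtoC 1 + RtoC 1 + RtoC 1) * (RtoC 1 + RtoC 1 + RtoC 1 + RtoC 1)*X0*Y2) _ hT).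
  ring.
Qed.

Close Scope C_scope.

Lemma cancelS t z : 0 < t -> (RtoC t * z = RtoC 0)%CC -> z = RtoC 0.
Proof.
  intros Ht H.
  transitivity ((RtoC (/t) * RtoC t) * z)%CC.
  - rewrite <- RtoC_mul, Rinv_l by lra; ring.
  - transitivity (RtoC (/t) * (RtoC t * z))%CC; [ring|]. rewrite H; ring.
Qed.

Ltac cd := first [ eassumption | eapply Cderiv_sub | eapply Cderiv_add | eapply Cderiv_opp
                 | eapply Cderiv_mul | apply Cderiv_id ].
Ltac inl := simpl; auto 10.
Theorem mainTheorem8
  (nu0 nu1 nu2 : CC)
  (Hnu : forall k : Z, (nu2 - nu1)%CC <> RtoC (IZR k))
  (x0 x1 x2 y0 y1 y2 xi0 xi1 xi2 eta0 eta1 eta2 : R -> CC)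
  (dx0 dx1 dx2 dy0 dy1 dy2 dxi0 dxi1 dxi2 deta0 deta1 deta2 : R -> CC)
  (d2eta0 d3eta0 : R -> CC)
  (Hder : forall s, 0 < s ->
     Cderiv x0 s (dx0 s) /\ Cderiv x1 s (dx1 s) /\ Cderiv x2 s (dx2 s) /\
     Cderiv y0 s (dy0 s) /\ Cderiv y1 s (dy1 s) /\ Cderiv y2 s (dy2 s) /\
     Cderiv xi0 s (dxi0 s) /\ Cderiv xi1 s (dxi1 s) /\ Cderiv xi2 s (dxi2 s) /\
     Cderiv eta0 s (deta0 s) /\ Cderiv eta1 s (deta1 s) /\ Cderiv eta2 s (deta2 s) /\
     Cderiv deta0 s (d2eta0 s) /\ Cderiv d2eta0 s (d3eta0 s))
  (Hsys : forall s, 0 < s ->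
     (RtoC s * dx0 s = - (eta0 s * x0 s) - x1 s)%CC /\
     (RtoC s * dx1 s = - (eta1 s * x0 s) - x2 s)%CC /\
     (RtoC s * dx2 s = - (eta2 s * x0 s) - RtoC s * x0 s
                       + xi0 s * x0 s + xi1 s * x1 s + xi2 s * x2 s)%CC /\
     (RtoC s * dy2 s = - (xi2 s * y2 s) + y1 s)%CC /\
     (RtoC s * dy1 s = - (xi1 s * y2 s) + y0 s)%CC /\
     (RtoC s * dy0 s = - (xi0 s * y2 s) + RtoC s * y2 s
                       + eta0 s * y0 s + eta1 s * y1 s + eta2 s * y2 s)%CC /\
     (dxi0 s = - (x0 s * y0 s))%CC /\
     (dxi1 s = - (x0 s * y1 s))%CC /\
     (dxi2 s = - (x0 s * y2 s))%CC /\
     (deta0 s = - (x0 s * y2 s))%CC /\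
     (deta1 s = - (x1 s * y2 s))%CC /\
     (deta2 s = - (x2 s * y2 s))%CC)
  (HB_eta : Clim0 eta0 (RtoC 0) /\ Clim0 eta1 (RtoC 0) /\ Clim0 eta2 (RtoC 0))
  (HB_xi : Clim0 xi0 (- (nu0 * nu1 * nu2))%CC /\
           Clim0 xi1 (nu0 * nu1 + nu0 * nu2 + nu1 * nu2)%CC /\
           Clim0 xi2 (- (nu0 + nu1 + nu2))%CC)
  (HB_xy : forall u v : R -> CC, In u (x0 :: x1 :: x2 :: nil) ->
     In v (y0 :: y1 :: y2 :: nil) ->
     Clim0 (fun s => u s * v s)%CC (RtoC 0) /\
     Clim0 (fun s => RtoC s * u s * v s)%CC (RtoC 0))
  (Hnz : forall s, 0 < s -> deta0 s <> RtoC 0) :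
  forall s, 0 < s ->
    let e1 := (nu0 + nu1 + nu2)%CC in
    let e2 := (nu0 * nu1 + nu0 * nu2 + nu1 * nu2)%CC in
    let F := (- (RtoC 3 * x0 s * y1 s) - RtoC 3 * x1 s * y2 s
              - e1 * x0 s * y2 s)%CC in
    let p := deta0 s in
    let q := d2eta0 s in
    let r := d3eta0 s in
    let S := RtoC s in
    (F * F =
       RtoC 4 * e1 * e1 * p * p - RtoC 12 * e2 * p * p
       + RtoC 12 * eta0 s * p * p - RtoC 36 * S * p * p * p
       + RtoC 9 * S * S * q * q
       - RtoC 12 * S * p * (q + S * r))%CC.
Proof.
  intros s Hs.
  assert (HT : forall t, 0 < t -> (x0 t * y0 t + x1 t * y1 t + x2 t * y2 t)%CC = RtoC 0).
  { apply C_const_lim.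
    - intros t Ht.
      destruct (Hder t Ht) as (?&?&?&?&?&?&?&?&?&?&?&?&?&?).
      destruct (Hsys t Ht) as (E0&E1&E2&F2&F1&F0&G0&G1&G2&K0&K1&K2).
      eapply Cderiv_eq; [repeat cd|].
      apply (cancelS t); auto.
      transitivity ((RtoC t * dx0 t) * y0 t + x0 t * (RtoC t * dy0 t)
        + ((RtoC t * dx1 t) * y1 t + x1 t * (RtoC t * dy1 t))
        + ((RtoC t * dx2 t) * y2 t + x2 t * (RtoC t * dy2 t)))%CC; [ring|].
      rewrite E0, E1, E2, F0, F1, F2; ring.
    - replace (RtoC 0) with (RtoC 0 + RtoC 0 + RtoC 0)%CC by ring.
      apply Clim0_add; [apply Clim0_add|].
      + apply (proj1 (HB_xy x0 y0 ltac:(inl) ltac:(inl))).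
      + apply (proj1 (HB_xy x1 y1 ltac:(inl) ltac:(inl))).
      + apply (proj1 (HB_xy x2 y2 ltac:(inl) ltac:(inl))). }
  assert (HJ : forall t, 0 < t -> (eta0 t - xi2 t)%CC = (RtoC 0 - - (nu0 + nu1 + nu2))%CC).
  { apply C_const_lim.
    - intros t Ht.
      destruct (Hder t Ht) as (?&?&?&?&?&?&?&?&?&?&?&?&?&?).
      destruct (Hsys t Ht) as (E0&E1&E2&F2&F1&F0&G0&G1&G2&K0&K1&K2).
      eapply Cderiv_eq; [repeat cd|].
      rewrite K0, G2; ring.
    - apply Clim0_sub; [apply HB_eta|apply HB_xi]. }
  assert (HI : forall t, 0 < t ->
     (eta0 t - eta1 t + xi1 t - xi2 t * eta0 t + RtoC t * x0 t * y2 t)%CC =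
     (RtoC 0 - RtoC 0 + (nu0 * nu1 + nu0 * nu2 + nu1 * nu2) - (- (nu0 + nu1 + nu2)) * RtoC 0 + RtoC 0)%CC).
  { apply C_const_lim.
    - intros t Ht.
      destruct (Hder t Ht) as (?&?&?&?&?&?&?&?&?&?&?&?&?&?).
      destruct (Hsys t Ht) as (E0&E1&E2&F2&F1&F0&G0&G1&G2&K0&K1&K2).
      eapply Cderiv_eq; [repeat cd|].
      rewrite K0, K1, G1, G2.
      apply (cancelS t); auto.
      transitivity (RtoC t * (- (x0 t * y2 t) - - (x1 t * y2 t) + - (x0 t * y1 t)
          - (- (x0 t * y2 t) * eta0 t + xi2 t * - (x0 t * y2 t)))
          + RtoC t * (x0 t * y2 t) + (RtoC t * dx0 t) * (RtoC t * y2 t)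
          + RtoC t * x0 t * (RtoC t * dy2 t))%CC; [ring|].
      rewrite E0, F2; ring.
    - apply Clim0_add; [apply Clim0_sub; [apply Clim0_add; [apply Clim0_sub|]|]|].
      + apply HB_eta.
      + apply HB_eta.
      + apply HB_xi.
      + apply Clim0_mul; [apply HB_xi|apply HB_eta].
      + apply (proj2 (HB_xy x0 y2 ltac:(inl) ltac:(inl))). }
  assert (Hq : forall t, 0 < t -> d2eta0 t = (- (dx0 t * y2 t + x0 t * dy2 t))%CC).
  { intros t Ht.
    destruct (Hder t Ht) as (?&?&?&?&?&?&?&?&?&?&?&?&?&?).
    eapply Cderiv_unique; [eassumption|].
    eapply (Cderiv_ext_pos (fun t => - (x0 t * y2 t))%CC); auto.
    - intros t' Ht'. destruct (Hsys t' Ht') as (_&_&_&_&_&_&_&_&_&K0&_). auto.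
    - repeat cd. }
  set (Kf := fun t => (-((-(eta0 t*x0 t) - x1 t)*y2 t + x0 t*(-(xi2 t*y2 t) + y1 t)))%CC).
  assert (HK : forall t, 0 < t -> (RtoC t * d2eta0 t)%CC = Kf t).
  { intros t Ht. destruct (Hsys t Ht) as (E0&E1&E2&F2&F1&F0&G0&G1&G2&K0&K1&K2).
    rewrite Hq by auto. unfold Kf.
    transitivity (- ((RtoC t * dx0 t) * y2 t + x0 t * (RtoC t * dy2 t)))%CC; [ring|].
    rewrite E0, F2; reflexivity. }
  destruct (Hder s Hs) as (?&?&?&?&?&?&?&?&?&?&?&?&Hd2&Hd3).
  destruct (Hsys s Hs) as (E0&E1&E2&F2&F1&F0&G0&G1&G2&K0&K1&K2).
  assert (Hr1 : Cderiv (fun t => RtoC t * d2eta0 t)%CC s (RtoC 1 * d2eta0 s + RtoC s * d3eta0 s)%CC).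
  { apply Cderiv_mul; auto. apply Cderiv_id. }
  assert (Hr2 : Cderiv (fun t => RtoC t * d2eta0 t)%CC s
     (- (((- (deta0 s * x0 s + eta0 s * dx0 s) - dx1 s) * y2 s + (-(eta0 s*x0 s) - x1 s) * dy2 s)
        + (dx0 s * (-(xi2 s*y2 s) + y1 s) + x0 s * (-(dxi2 s * y2 s + xi2 s * dy2 s) + dy1 s))))%CC).
  { apply (Cderiv_ext_pos Kf); auto.
    - intros t Ht; symmetry; apply HK; auto.
    - unfold Kf. eapply Cderiv_eq; [repeat cd|]. cbv beta; ring. }
  pose proof (Cderiv_unique _ _ _ _ Hr1 Hr2) as Hr.
  rewrite K0, G2 in Hr.
  intros e1 e2 F p q r S.
  unfold F, p, q, r, S.
  eapply (alg (RtoC s) (x0 s) (x1 s) (x2 s) (y0 s) (y1 s) (y2 s) (xi1 s) (xi2 s) (eta0 s) (eta1 s)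
     e1 e2 (deta0 s) (d2eta0 s) (d3eta0 s) (dx0 s) (dx1 s) (dy1 s) (dy2 s)).
  - exact K0.
  - apply Hq; auto.
  - rewrite Hr; ring.
  - exact E0.
  - exact E1.
  - exact F2.
  - exact F1.
  - apply HT; auto.
  - unfold e1. pose proof (HJ s Hs) as Hj. rewrite Hj; ring.
  - unfold e2. pose proof (HI s Hs) as Hj.
    transitivity (eta0 s - eta1 s + xi1 s - xi2 s * eta0 s + RtoC s * x0 s * y2 s)%CC; [rewrite Hj; ring|ring].
Qed.
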